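(* Let $p$ be a prime and $G=\mathbb{Z}\times\mathbb{Z}_p=\langle z\rangle\times\langle a\rangle$. If $\mathcal{S}$ is a Schur ring over $G$ such that $\langle a^iz\rangle$ is an $\mathcal{S}$-subgroup for some integer $i$, then $\mathcal{S}$ is an automorphic Schur ring.
   Context: $F$ is a field of characteristic $0$; $\mathbb{Z}=\langle z\rangle$ infinite cyclic, $\mathbb{Z}_p=\langle a\rangle$ cyclic of order $p$, written multiplicatively. For finite $C\subseteq G$, $\overline{C}=\sum_{g\in C}g$ and $C^*=\{g^{-1}:g\in C\}$. A Schur ring over $G$ is a subspace $\mathcal{S}=\mathrm{Span}_F\{\overline{C}:C\in\mathcal{D}\}$ of $F[G]$, where $\mathcal{D}$ is a partition of $G$ into finite subsets with $\{1\}\in\mathcal{D}$, $C\in\mathcal{D}\Rightarrow C^*\in\mathcal{D}$, and each $\overline{C}\,\overline{D}$ a finite $F$-linear combination of the $\overline{E}$, $E\in\mathcal{D}$. An $\mathcal{S}$-subgroup is a subgroup that is a union of members of $\mathcal{D}$. $\mathcal{S}$ is automorphic if $\mathcal{S}=F[G]^{\mathcal{H}}$ (elements fixed by $\mathcal{H}$; classes are the $\mathcal{H}$-orbits) for some finite $\mathcal{H}\le\operatorname{Aut}(G)$. *)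

(* Defs.v *)
From HB Require Import structures.
From mathcomp Require Import all_boot all_order all_algebra.
Set Implicit Arguments. Unset Strict Implicit. Unset Printing Implicit Defensive.
Import Order.TTheory GRing.Theory Num.Theory.
Local Open Scope ring_scope.

(* G = Z x Z_p, written ADDITIVELY: (m, j) stands for z^m a^j.
   So z = (1,0), a = (0,1), a^i z = (1, i), group product = +, inverse = -,
   identity = 0. *)
Definition grp (p : nat) := (int * 'Z_p)%type.

Section SchurDefs.
Variables (F : fieldType) (p : nat).
Local Notation G := (grp p).

Definition enumerates (s : seq G) (P : pred G) : Prop :=
  uniq s /\ forall g, (g \in s) = P g.

(* Elements of F[G] are finitely supported functions G -> F. *)
Definition fin_supp (f : G -> F) : Prop :=
  exists s : seq G, forall g, f g != 0 -> g \in s.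

(* The partition D is given by an equivalence relation R; the class of x
   is [pred y | R x y].  Class sum of the class of x, as an element of F[G]. *)
Definition class_sum (R : rel G) (x : G) : G -> F := fun g => (R x g)%:R.

Definition schur_span (R : rel G) (f : G -> F) : Prop :=
  exists (xs : seq G) (cs : seq F),
    f = fun g => \sum_(k < size xs) cs`_k * class_sum R xs`_k g.

(* The product (sum of s)(sum of t) in F[G], for s, t enumerations of
   finite subsets: coefficient of g is #{(c,d) in s x t | c d = g}. *)
Definition prod_sum (s t : seq G) : G -> F :=
  fun g => \sum_(c <- s) \sum_(d <- t) (c + d == g)%:R.

Record schur_ring (R : rel G) : Prop := {
  sr_refl : reflexive R;
  sr_sym : symmetric R;
  sr_trans : transitive R;
  sr_finite : forall x, exists s, enumerates s (R x);
  sr_one : forall g, R 0 g = (g == 0);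
  sr_inv : forall x y, R x y -> R (- x) (- y);
  sr_prod : forall x y s t, enumerates s (R x) -> enumerates t (R y) ->
              schur_span R (prod_sum s t)
}.

Definition cyc (w : G) (g : G) : Prop := exists n : int, g = w *~ n.

Definition S_subgroup (R : rel G) (H : G -> Prop) : Prop :=
  forall x y, R x y -> H x -> H y.

Definition group_aut (h : G -> G) : Prop :=
  (forall x y, h (x + y) = h x + h y) /\ bijective h.

(* S is automorphic: S = F[G]^H for a finite subgroup H = {H_0,...,H_(n-1)}
   of Aut(G); F[G]^H = finitely supported f fixed by the action
   (h.f)(g) = f(h^-1 g), i.e. f o h = f for all h in H. *)
Definition automorphic (R : rel G) : Prop :=
  exists (n : nat) (H : 'I_n -> G -> G),
    [/\ forall k, group_aut (H k),
        exists k, H k =1 id,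
        forall k l, exists m, H m =1 H k \o H l,
        forall k, exists m, cancel (H k) (H m) &
        forall f : G -> F, schur_span R f <->
          (fin_supp f /\ forall k g, f (H k g) = f g)].

End SchurDefs.

(* Main.v *)
Require Import Defs.
From HB Require Import structures.
From mathcomp Require Import all_boot all_order all_algebra.
From mathcomp Require Import zify.
From Stdlib Require Import FunctionalExtensionality.
Set Implicit Arguments. Unset Strict Implicit. Unset Printing Implicit Defensive.
Import Order.TTheory GRing.Theory Num.Theory.
Local Open Scope ring_scope.

Lemma sum_count (T : Type) (s : seq T) (P : pred T) :
  (\sum_(x <- s) (P x : nat) = count P s)%N.
Proof. by elim: s => [|x s IH]; rewrite ?big_nil ?big_cons ?IH. Qed.

Section Main.
Variables (F : fieldType) (p : nat) (R : rel (grp p)).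
Hypothesis char0 : [pchar F] =i pred0.
Hypothesis pp : prime p.
Hypothesis SR : schur_ring F R.
Local Notation G := (grp p).

Lemma natF_inj (m n : nat) : (m%:R : F) = n%:R -> m = n.
Proof.
have H0 := (pcharf0P F).1 char0.
wlog le : m n / (m <= n)%N => [W|].
  by case/orP: (leq_total m n) => ? E; [apply: W|symmetry; apply: W].
move=> E; apply/eqP; rewrite eqn_leq le /=.
have: ((n - m)%N%:R : F) == 0 by rewrite natrB // E subrr.
by rewrite H0 subn_eq0.
Qed.

Lemma Rsym x y : R x y = R y x.
Proof. exact: (sr_sym SR). Qed.
Lemma Rtr x y z : R x y -> R y z -> R x z.
Proof. exact: (sr_trans SR). Qed.
Lemma Rrefl x : R x x.
Proof. exact: (sr_refl SR). Qed.
Lemma Rcl x y z : R x y -> R z x = R z y.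
Proof.
move=> Hxy; apply/idP/idP => H; first exact: Rtr H Hxy.
by apply: Rtr H _; rewrite Rsym.
Qed.
Lemma Rneg x y : R x y -> R (- x) (- y).
Proof. exact: (sr_inv SR). Qed.
Lemma R0 y : R 0 y = (y == 0).
Proof. exact: (sr_one SR). Qed.

Definition spanL (l : seq (G * F)) (g : G) : F :=
  \sum_(xc <- l) xc.2 * class_sum F R xc.1 g.

Lemma span_L (f : G -> F) : schur_span R f -> exists l, f = spanL l.
Proof.
case=> xs [cs ->].
exists [seq (nth 0 xs k, nth 0 cs k) | k <- iota 0 (size xs)].
apply: functional_extensionality => g.
by rewrite /spanL big_map -val_enum_ord big_map /= big_enum.
Qed.

Lemma L_span l : schur_span R (spanL l).
Proof.
exists (map fst l), (map snd l).
apply: functional_extensionality => g.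
rewrite /spanL (big_nth (0, 0)) big_mkord size_map; apply: eq_bigr => k _.
by rewrite !(nth_map (0,0)).
Qed.

Lemma span_const (f : G -> F) x y : schur_span R f -> R x y -> f x = f y.
Proof.
case/span_L=> l -> H; rewrite /spanL; apply: eq_bigr => xc _.
by rewrite /class_sum (Rcl _ H).
Qed.


Lemma prod_sum_cnt x (t s : seq G) g : enumerates t (R x) ->
  prod_sum F t s g = (count (fun d => R x (g - d)) s)%:R.
Proof.
case=> Ut Mt; rewrite /prod_sum exchange_big /= -sum_count natr_sum.
apply: eq_bigr => d _; rewrite -natr_sum sum_count -Mt -count_uniq_mem //.
congr (_%:R); apply: eq_count => c /=.
by apply/eqP/eqP => [<-|->]; rewrite ?addrK ?subrK.
Qed.

Definition cntR x0 (t : seq G) z := count (fun d => R x0 (z - d)) t.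

Lemma T1 x0 y0 t z z' : enumerates t (R y0) -> R z z' ->
  cntR x0 t z = cntR x0 t z'.
Proof.
move=> Ht Hz; have [s Hs] := sr_finite SR x0.
have Hsp := sr_prod SR Hs Ht.
apply: natF_inj; rewrite -!(prod_sum_cnt _ _ Hs).
exact: span_const Hsp Hz.
Qed.

Lemma TQ x0 y0 z z' : R z z' ->
  (exists d, R y0 d /\ R x0 (z - d)) -> exists d, R y0 d /\ R x0 (z' - d).
Proof.
move=> Hz [d [H1 H2]]; have [t [Ut Mt]] := sr_finite SR y0.
have E := T1 x0 (conj Ut Mt) Hz.
have : has (fun d => R x0 (z - d)) t by apply/hasP; exists d; rewrite ?Mt.
rewrite has_count -/(cntR _ _ _) E /cntR -has_count => /hasP[d' Hd' H'].
by exists d'; rewrite -Mt.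
Qed.

Lemma span_add (f1 f2 : G -> F) : schur_span R f1 -> schur_span R f2 ->
  schur_span R (fun g => f1 g + f2 g).
Proof.
case/span_L=> l1 -> /span_L[l2 ->].
have -> : (fun g => spanL l1 g + spanL l2 g) = spanL (l1 ++ l2).
  by apply: functional_extensionality => g; rewrite /spanL big_cat.
exact: L_span.
Qed.

Lemma span_scale (c : F) (f : G -> F) : schur_span R f ->
  schur_span R (fun g => c * f g).
Proof.
case/span_L=> l ->.
have -> : (fun g => c * spanL l g) = spanL [seq (xc.1, c * xc.2) | xc <- l].
  apply: functional_extensionality => g.
  by rewrite /spanL big_map big_distrr; apply: eq_bigr => xc _ /=; rewrite mulrA.
exact: L_span.
Qed.

Lemma span_zero : schur_span R (fun _ : G => 0 : F).
Proof.
have -> : (fun _ : G => 0 : F) = spanL [::].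
  by apply: functional_extensionality => g; rewrite /spanL big_nil.
exact: L_span.
Qed.

Lemma span_mulclass (f : G -> F) x0 s : enumerates s (R x0) ->
  schur_span R f -> schur_span R (fun g => \sum_(c <- s) f (g - c)).
Proof.
move=> Hs /span_L[l ->]; elim: l => [|xc l IH].
  have -> : (fun g => \sum_(c <- s) spanL [::] (g - c)) = (fun _ => 0).
    apply: functional_extensionality => g.
    by rewrite big1 // => c _; rewrite /spanL big_nil.
  exact: span_zero.
have [t Ht] := sr_finite SR xc.1.
have -> : (fun g => \sum_(c <- s) spanL (xc :: l) (g - c)) =
   (fun g => xc.2 * prod_sum F t s g + \sum_(c <- s) spanL l (g - c)).
  apply: functional_extensionality => g.
  rewrite (prod_sum_cnt _ _ Ht) -sum_count natr_sum big_distrr -big_split /=.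
  by apply: eq_bigr => c _; rewrite /spanL big_cons.
apply: span_add; last exact: IH; apply: span_scale; exact: (sr_prod SR Ht Hs).
Qed.


Fixpoint tc (s : seq G) (k : nat) (g : G) : nat :=
  if k is k'.+1 then (\sum_(c <- s) tc s k' (g - c)%R)%N else (g == 0 : nat).

Lemma tc_span x0 s k : enumerates s (R x0) ->
  schur_span R (fun g => (tc s k g)%:R : F).
Proof.
move=> Hs; elim: k => [|k IH].
  have -> : (fun g => ((tc s 0 g)%:R : F)) = spanL [:: (0, 1)].
    apply: functional_extensionality => g.
    by rewrite /spanL big_cons big_nil /class_sum R0 mul1r addr0.
  exact: L_span.
have -> : (fun g => ((tc s k.+1 g)%:R : F)) =
          (fun g => \sum_(c <- s) (tc s k (g - c))%:R).
  by apply: functional_extensionality => g; rewrite /= natr_sum.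
exact: span_mulclass Hs IH.
Qed.

Lemma tc_binom c s k g : tc (c :: s) k g =
  (\sum_(i < k.+1) 'C(k, i) * tc s (k - i) (g - c *+ i)%R)%N.
Proof.
elim: k g => [|k IH] g.
  by rewrite big_ord1 /= mul1n mulr0n subr0.
rewrite /= big_cons IH.
under eq_bigr => d _ do rewrite IH.
rewrite exchange_big /=.
under [X in (_ + X)%N]eq_bigr => i _.
  rewrite -big_distrr /=.
  under eq_bigr => d _ do rewrite -addrA [(- d + _)%R]addrC addrA.
  rewrite -[(\sum_(d <- s) _)%N]/(tc s (k - i).+1 (g - c *+ i)%R).
  over.
rewrite [X in (_ + X)%N]big_ord_recl [RHS]big_ord_recl /=.
rewrite !bin0 !subn0 !mulr0n !subr0 !mul1n.
have tcS m h : (\sum_(c0 <- s) tc s m (h - c0)%R)%N = tc s m.+1 h by [].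
rewrite tcS.
rewrite /bump.
under [in RHS]eq_bigr => i _ do rewrite add1n binS mulnDl subSS.
under [X in (_ + (_ + X))%N = _]eq_bigr => i _ do rewrite add1n tcS subnSK //.
rewrite big_split /= [X in _ = (_ + (X + _))%N]big_ord_recr /= bin_small // mul0n addn0.
rewrite addnCA; congr (_ + _)%N; rewrite addnC; congr (_ + _)%N.
by apply: eq_bigr => i _; rewrite mulrS opprD addrA.
Qed.




Lemma tc_mod s q g : prime q ->
  tc s q g = count (fun c => c *+ q == g) s %[mod q].
Proof.
move=> pq; have q_gt0 := prime_gt0 pq.
elim: s => [|c s IH].
  by case: q pq q_gt0 => // q _ _; rewrite /= big_nil.
rewrite tc_binom /=.
case: q pq q_gt0 IH => // q pq _ IH.
rewrite big_ord_recr big_ord_recl /= bin0 mul1n mulr0n subr0 subnn binn mul1n.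
have -> : (\sum_(c0 <- s) tc s q (g - c0)%R)%N = tc s q.+1 g by [].
have /dvdnP[m Hm] : (q.+1 %| \sum_(i < q) 'C(q.+1, bump 0 i) *
      tc s (q.+1 - bump 0 i) (g - c *+ bump 0 i)%R)%N.
  apply: dvdn_sum => i _; apply: dvdn_mulr; apply: prime_dvd_bin => //.
  have := ltn_ord i; by rewrite /bump /= add1n ltnS.
rewrite Hm addnAC addnC modnMDl -modnDml IH modnDml /= subr_eq0 eq_sym addnC.
by [].
Qed.


Lemma Frob_prime x q y : prime q ->
  (forall c, R x c -> c *+ q = x *+ q -> c = x) ->
  R (x *+ q) y -> exists c, R x c /\ y = c *+ q.
Proof.
move=> pq inj Hy; have [s [Us Ms]] := sr_finite SR x.
have Hsp := tc_span q (conj Us Ms).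
have E : tc s q (x *+ q) = tc s q y by apply: natF_inj; exact: span_const Hsp Hy.
have C1 : count (fun c => c *+ q == x *+ q) s = 1%N.
  rewrite (@eq_in_count _ _ (pred1 x)) ?count_uniq_mem ?Ms ?Rrefl //.
  move=> c; rewrite Ms => Hc /=; apply/eqP/eqP => [/(inj _ Hc)|->] //.
have := tc_mod s y pq; rewrite -E tc_mod // C1.
have q1 := prime_gt1 pq.
case: (posnP (count (fun c => c *+ q == y) s)) => [->|].
  by rewrite mod0n modn_small.
rewrite -has_count => /hasP[c Hc /eqP <-] _.
by exists c; rewrite -Ms.
Qed.

Lemma Frob_gen (P : G -> Prop) k : (0 < k)%N ->
  (forall a b, P a -> R a b -> P b) -> (forall a m, P a -> P (a *+ m)) ->
  (forall q a b, prime q -> (q %| k)%N -> P a -> P b -> a *+ q = b *+ q -> a = b) ->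
  forall x y, P x -> R (x *+ k) y -> exists c, R x c /\ y = c *+ k.
Proof.
elim/ltn_ind: k => k IHk k0 PR PM Pinj x y Px Hy.
have [k1|k1] := leqP k 1.
  have E1 : k = 1%N by apply/eqP; rewrite eqn_leq k1 k0.
  rewrite E1 mulr1n in Hy *; by exists y; split.
have pq := pdiv_prime k1; have qk := pdiv_dvd k.
set q := pdiv k in pq qk; set k' := (k %/ q)%N.
have Ek : k = (k' * q)%N by rewrite divnK.
have q1 := prime_gt1 pq.
have k'k : (k' < k)%N by rewrite ltn_Pdiv // ltnW.
have k'0 : (0 < k')%N by rewrite divn_gt0 ?prime_gt0 // dvdn_leq // ltnW.
rewrite Ek mulrnA in Hy.
have [c1 [Hc1 ->]] := Frob_prime pq (fun c Hc E => Pinj q c (x *+ k') pq qk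
   (PR _ _ (PM _ _ Px) Hc) (PM _ _ Px) E) Hy.
have [c [Hc ->]] : exists c, R x c /\ c1 = c *+ k'.
  apply: (IHk k' k'k k'0 PR PM) => //.
  move=> q' a b pq' q'k; apply: Pinj => //; rewrite Ek; exact: dvdn_mulr.
by exists c; split => //; rewrite -mulrnA -Ek.
Qed.


Variable i0 : 'Z_p.
Hypothesis HS : S_subgroup R (cyc ((1%:Z, i0) : G)).

Definition ph (n : int) (j : 'Z_p) : G := (n, i0 *~ n + j).
Definition ac (x : G) : 'Z_p := x.2 - i0 *~ x.1.

Lemma p1 : (1 < p)%N. Proof. exact: prime_gt1. Qed.

Lemma phE x : ph x.1 (ac x) = x.
Proof. by case: x => a b; rewrite /ph /ac /= addrC subrK. Qed.
Lemma ph1 n j : (ph n j).1 = n. Proof. by []. Qed.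
Lemma acph n j : ac (ph n j) = j.
Proof. by rewrite /ac /ph /= addrC addKr. Qed.
Lemma phD n j m l : ph n j + ph m l = ph (n + m) (j + l).
Proof.
rewrite /ph; congr pair => /=; rewrite mulrzDr.
by rewrite -!addrA; congr (_ + _); rewrite addrCA.
Qed.
Lemma phN n j : - ph n j = ph (- n) (- j).
Proof. by rewrite /ph; congr pair => /=; rewrite opprD mulrNz. Qed.
Lemma phB n j m l : ph n j - ph m l = ph (n - m) (j - l).
Proof. by rewrite phN phD. Qed.
Lemma phMn n j k : ph n j *+ k = ph (n *+ k) (j *+ k).
Proof.
elim: k => [|k IH]; first by rewrite !mulr0n /ph mulr0z addr0.
by rewrite !mulrS IH phD.
Qed.
Lemma ph00 : ph 0 0 = 0.
Proof. by rewrite /ph mulr0z addr0. Qed.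
Lemma ph_inj n j m l : ph n j = ph m l -> n = m /\ j = l.
Proof.
move=> E; have E1 : n = m by have := congr1 fst E.
by split => //; rewrite -(acph n j) -(acph m l) E.
Qed.
Lemma acMn x k : ac (x *+ k) = ac x *+ k.
Proof. by rewrite -{1}(phE x) phMn acph. Qed.
Lemma acN x : ac (- x) = - ac x.
Proof. by rewrite -{1}(phE x) phN acph. Qed.
Lemma acD x y : ac (x + y) = ac x + ac y.
Proof. by rewrite -{1}(phE x) -{1}(phE y) phD acph. Qed.

Lemma pair_eq (a b : G) : a.1 = b.1 -> a.2 = b.2 -> a = b.
Proof. by case: a b => a1 a2 [b1 b2] /= -> ->. Qed.

Lemma fstMz (x : G) n : (x *~ n).1 = x.1 *~ n.
Proof. by rewrite raddfMz. Qed.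
Lemma sndMz (x : G) n : (x *~ n).2 = x.2 *~ n.
Proof. by rewrite raddfMz. Qed.

Lemma cycE x : cyc ((1%:Z, i0) : G) x <-> ac x = 0.
Proof.
split.
  by case=> n ->; rewrite /ac fstMz sndMz intz subrr.
move=> H; exists x.1; rewrite -{1}(phE x) H /ph addr0.
by apply: pair_eq; [rewrite fstMz intz | rewrite sndMz].
Qed.

Lemma HSac x y : R x y -> ac x = 0 -> ac y = 0.
Proof. by move=> Hxy /cycE Hx; apply/cycE; exact: HS Hxy Hx. Qed.



Lemma fstMn (x : G) n : (x *+ n).1 = x.1 *+ n.
Proof. by rewrite raddfMn. Qed.
Lemma sndMn (x : G) n : (x *+ n).2 = x.2 *+ n.
Proof. by rewrite raddfMn. Qed.

Lemma FrobC x y k : (0 < k)%N -> coprime k p ->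
  R (x *+ k) y -> exists c, R x c /\ y = c *+ k.
Proof.
move=> k0 ck; apply: (@Frob_gen (fun _ => True)); [by []|by []|by []| |by []].
move=> q a b pq qk _ _ E.
have cq : coprime p q by rewrite coprime_sym; exact: coprime_dvdl qk ck.
apply: pair_eq.
  have := congr1 fst E; rewrite !fstMn.
  by move/eqP; rewrite (eqr_pMn2r (prime_gt0 pq)) => /eqP.
have := congr1 snd E; rewrite !sndMn -(mulr_natr a.2) -(mulr_natr b.2).
apply: mulIr; rewrite unitZpE; [exact: cq | exact: p1].
Qed.

Lemma FrobH x y k : (0 < k)%N -> ac x = 0 ->
  R (x *+ k) y -> exists c, R x c /\ y = c *+ k.
Proof.
move=> k0 Hx; apply: (@Frob_gen (fun a => ac a = 0)); [by []| | | |by []].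
- by move=> a b Ha Hab; exact: HSac Hab Ha.
- by move=> a m Ha; rewrite acMn Ha mul0rn.
move=> q a b pq _ Ha Hb E.
rewrite -(phE a) -(phE b) Ha Hb; congr ph.
have := congr1 fst E; rewrite !fstMn.
by move/eqP; rewrite (eqr_pMn2r (prime_gt0 pq)) => /eqP.
Qed.


Let p1L : (1 < p)%N := p1.

Lemma Hcls n y : R (ph n 0) y -> y = ph n 0 \/ y = ph (- n) 0.
Proof.
move=> H; have ay : ac y = 0 := HSac H (acph n 0).
have Ey : y = ph y.1 0 by rewrite -{1}(phE y) ay.
have key : forall n m, n != 0 -> R (ph n 0) (ph m 0) -> (absz n %| absz m)%N.
  move=> {H ay Ey y} n m n0 H.
  have [x1 [k [k0 Ex ax Ek]]] : exists x1 k, [/\ (0 < k)%N, ph n 0 = x1 *+ k, ac x1 = 0 & absz n = k].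
    case: n n0 H => k n0 H.
      exists (ph 1 0), k; rewrite phMn mul0rn acph; split => //.
        by move: n0; rewrite lt0n; apply: contra => /eqP ->.
      by congr ph; rewrite natz.
    exists (ph (-1) 0), k.+1; rewrite phMn mul0rn acph; split => //.
    by congr ph; rewrite mulNrn natz NegzE.
  rewrite Ex in H; subst k; have [c [Hc Ec]] := FrobH k0 ax H.
  have ac0 : ac c = 0 := HSac Hc ax.
  move: Ec; rewrite -(phE c) ac0 phMn mul0rn => /ph_inj [-> _].
  apply/dvdnP; exists (absz c.1); lia.
case: (n =P 0) => [n0|/eqP n0].
  by move: H; rewrite n0 ph00 R0 => /eqP ->; left.
case: (y.1 =P 0) => [y0|/eqP y0].
  by move: H; rewrite Ey y0 ph00 Rsym R0 -ph00 => /eqP/ph_inj[E _]; rewrite E eqxx in n0.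
have H' : R (ph n 0) (ph y.1 0) by rewrite -Ey.
have d1 := key _ _ n0 H'.
have d2 := key _ _ y0 (etrans (Rsym _ _) H').
have : absz n = absz y.1 by apply/eqP; rewrite eqn_dvd d1 d2.
move=> E; have [H1|H1] : y.1 = n \/ y.1 = - n by lia.
  by left; rewrite Ey H1.
by right; rewrite Ey H1.
Qed.

Lemma Zp_unit (u : 'Z_p) : u != 0 -> u \is a GRing.unit.
Proof.
move=> u0; rewrite -[u]natr_Zp unitZpE // prime_coprime //.
have ult : (u < p)%N by apply: (leq_trans (ltn_ord u)); rewrite Zp_cast.
have upos : (0 < u)%N.
  by rewrite lt0n; apply: contra u0 => /eqP H; apply/eqP; apply: val_inj.
by apply/negP => /(dvdn_leq upos); rewrite leqNgt ult.
Qed.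

Lemma tors j y : R (ph 0 j) y -> y = ph 0 (ac y).
Proof.
move=> H; set M := absz y.1; set k := (M.+1 * p).+1.
have k0 : (0 < k)%N by [].
have ck : coprime k p.
  rewrite coprime_sym -coprime_modr /k -addn1 modnMDl modn_small //.
  exact: coprimen1.
have Ej : ph 0 j *+ k = ph 0 j.
  rewrite phMn mul0rn; congr ph.
  by rewrite /k mulrSr mulrnA -mulr_natr pchar_Zp // mulr0 add0r.
rewrite -Ej in H; have [c [_ Ec]] := FrobC k0 ck H.
have E1 : y.1 = c.1 *+ k by rewrite Ec fstMn.
have y10 : y.1 = 0.
  have E2 : M = (absz c.1 * k)%N by rewrite /M E1; lia.
  case: (posnP (absz c.1)) => [a0|a0].
    by move: E2; rewrite a0 mul0n /M => /eqP; rewrite absz_eq0 => /eqP.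
  have kM : (k <= M)%N by rewrite E2 leq_pmull.
  have Mk : (M < k)%N.
    rewrite /k ltnS; apply: leq_trans (leqnSn M) _.
    by rewrite leq_pmulr // prime_gt0.
  by move: (leq_trans kM Mk); rewrite ltnn.
by rewrite -{1}(phE y) y10.
Qed.

Lemma torsU v j j' : v \is a GRing.unit ->
  R (ph 0 j) (ph 0 j') -> R (ph 0 (v * j)) (ph 0 (v * j')).
Proof.
move=> vU H.
set k' := nat_of_ord (v^-1).
have k'v : (k'%:R : 'Z_p) = v^-1 by rewrite natr_Zp.
have vU' : v^-1 \is a GRing.unit by rewrite unitrV.
have cop : coprime k' p by rewrite coprime_sym -unitZpE // k'v.
have k'0 : (0 < k')%N.
  rewrite lt0n; apply/negP => /eqP k'0; move: vU'; rewrite -k'v k'0 unitr0.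
  by [].
set x := ph 0 (v * j).
have Ex : x *+ k' = ph 0 j.
  by rewrite phMn mul0rn -mulr_natr k'v mulrC mulKr.
rewrite -Ex in H; have [c [Hc Ec]] := FrobC k'0 cop H.
have Ec2 := tors Hc.
move: Ec; rewrite Ec2 phMn mul0rn => /ph_inj [_ E].
have -> : v * j' = ac c by rewrite E -mulr_natr k'v mulrCA mulrV // mulr1.
by rewrite -Ec2.
Qed.

Lemma U_unit u : R (ph 0 1) (ph 0 u) -> u \is a GRing.unit.
Proof.
move=> H; apply: Zp_unit; apply/eqP => u0; move: H.
rewrite u0 ph00 Rsym R0 -ph00 => /eqP/ph_inj[_ /eqP].
by rewrite oner_eq0.
Qed.

Lemma torsE j y : j != 0 ->
  R (ph 0 j) y <-> exists u, R (ph 0 1) (ph 0 u) /\ y = ph 0 (j * u).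
Proof.
move=> j0; have jU := Zp_unit j0; split.
  move=> H; have Ey := tors H; exists (j^-1 * ac y); split.
    have H' : R (ph 0 j) (ph 0 (ac y)) by rewrite -Ey.
    have jU' : j^-1 \is a GRing.unit by rewrite unitrV.
    have := torsU jU' H'.
    by rewrite mulVr.
  by rewrite mulVKr.
case=> u [Hu ->]; have := torsU jU Hu; by rewrite mulr1.
Qed.

Lemma layer n j y : R (ph n j) y ->
  exists e, [/\ e = n \/ e = - n, y = ph e (ac y) & R (ph 0 j) (ph 0 (ac y))].
Proof.
move=> H.
have [d [Hd Hd2]] : exists d, R (ph 0 j) d /\ R (ph n 0) (y - d).
  apply: (TQ H); exists (ph 0 j); split; first exact: Rrefl.
  by rewrite phB subr0 subrr; exact: Rrefl.
have Ed := tors Hd.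
have [E|E] := Hcls Hd2.
  exists n; have Ey : y = ph n (ac d) by rewrite -(subrK d y) E {1}Ed phD addr0 add0r.
  have acy : ac y = ac d by rewrite Ey acph.
  by rewrite acy -Ed; split => //; left.
exists (- n); have Ey : y = ph (- n) (ac d) by rewrite -(subrK d y) E {1}Ed phD addr0 add0r.
have acy : ac y = ac d by rewrite Ey acph.
by rewrite acy -Ed; split => //; right.
Qed.

Definition sg (b : bool) (n : int) : int := if b then - n else n.

Lemma RS x y : R x y -> R y x.
Proof. by rewrite Rsym. Qed.

Lemma layerE n j m j' : R (ph n j) (ph m j') -> m = n \/ m = - n.
Proof.
case/layer=> e [He Ey _]; have [E _] := ph_inj Ey.
by rewrite E.
Qed.

Lemma layerJ n j m j' : R (ph n j) (ph m j') -> R (ph 0 j) (ph 0 j').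
Proof. by case/layer=> e [_ _]; rewrite acph. Qed.

Lemma cls1 s d : R (ph s 0) d -> s = 1 \/ s = -1 ->
  exists e, (e = 1 \/ e = -1) /\ d = ph e 0.
Proof.
move=> H Hs; have [->|->] := Hcls H.
  by exists s.
by exists (- s); split => //; lia.
Qed.

Lemma exsign n j j' : R (ph 0 j) (ph 0 j') -> exists b, R (ph n j) (ph (sg b n) j').
Proof.
move=> H.
have H' : R (ph 0 (-j)) (ph 0 (-j')) by have := Rneg H; rewrite !phN oppr0.
have W : exists d, R (ph n 0) d /\ R (ph (-n) (-j)) (ph 0 (-j) - d).
  by exists (ph n 0); rewrite phB sub0r subr0; split; exact: Rrefl.
have [d [Hd Hd2]] := TQ H' W.
have [E|E] := Hcls Hd; rewrite E phB sub0r subr0 in Hd2;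
  have := Rneg Hd2; rewrite !phN !opprK => H3.
  by exists false.
by exists true.
Qed.

Lemma fullprop n j j' : n != 0 -> R (ph n j) (ph (-n) j) ->
  R (ph 0 j) (ph 0 j') -> R (ph n j) (ph n j') /\ R (ph n j) (ph (-n) j').
Proof.
move=> n0 Hf Hj.
have Hn : R (ph n 0) (ph (-n) 0).
  have W : exists d, R (ph 0 j) d /\ R (ph n 0) (ph n j - d).
    by exists (ph 0 j); rewrite phB subr0 subrr; split; exact: Rrefl.
  have [d [Hd Hd2]] := TQ Hf W.
  rewrite (tors Hd) phB in Hd2.
  have [E|E] := Hcls Hd2; last by rewrite E in Hd2.
  have [E1 _] := ph_inj E; lia.
have Ht : enumerates [:: ph n 0; ph (-n) 0] (R (ph n 0)).
  split.
    rewrite /= andbT inE; apply/eqP => /ph_inj [E _]; lia.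
  move=> g; rewrite !inE; apply/idP/idP.
    by case/orP => /eqP ->; [exact: Rrefl | exact: Hn].
  by case/Hcls => ->; rewrite eqxx ?orbT.
have Hj' : R (ph 0 (-j)) (ph 0 (-j')) by have := Rneg Hj; rewrite !phN oppr0.
have := T1 (ph (-n) (-j)) Ht Hj'.
rewrite /cntR /= !phB !sub0r !subr0 opprK.
have h2 : R (ph (-n) (-j)) (ph n (-j)) by have := Rneg Hf; rewrite !phN opprK.
rewrite Rrefl h2 /=.
case: (boolP (R (ph (-n) (-j)) (ph (-n) (-j')))) => Ha;
case: (boolP (R (ph (-n) (-j)) (ph n (-j')))) => Hb //=.
move=> _; split.
  by have := Rneg Ha; rewrite !phN !opprK.
by have := Rneg Hb; rewrite !phN !opprK.
Qed.

Lemma BothFull n j j' : n != 0 -> R (ph n j) (ph n j') ->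
  R (ph n j) (ph (-n) j') -> R (ph n j) (ph (-n) j).
Proof.
move=> n0 H1 H2.
have Hf' : R (ph n j') (ph (-n) j') := Rtr (RS H1) H2.
have [_ H3] := fullprop n0 Hf' (RS (layerJ H1)).
exact: Rtr H1 H3.
Qed.

Lemma both n j j' b : n != 0 -> R (ph n j) (ph (sg b n) j') ->
  R (ph n j) (ph (sg (~~ b) n) j') -> R (ph n j) (ph (-n) j).
Proof. by move=> n0; case: b => /= H1 H2; [exact: BothFull n0 H2 H1 | exact: BothFull n0 H1 H2]. Qed.

Lemma FullUp n j : 0 < n -> R (ph n j) (ph (-n) j) ->
  R (ph (n+1) j) (ph (-(n+1)) j).
Proof.
move=> n0 Hf.
have W : exists d, R (ph (-1) 0) d /\ R (ph (n+1) j) (ph n j - d).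
  by exists (ph (-1) 0); rewrite phB subr0 opprK; split; exact: Rrefl.
have [d [Hd Hd2]] := TQ Hf W.
have [e [He Ed]] := cls1 Hd (or_intror erefl).
rewrite Ed phB subr0 in Hd2.
have := layerE Hd2 => Hl.
have -> : - (n + 1) = - n - e by lia.
exact: Hd2.
Qed.

Lemma FullDown n j : 0 < n -> R (ph (n+1) j) (ph (-(n+1)) j) ->
  R (ph n j) (ph (-n) j).
Proof.
move=> n0 Hf.
have W : exists d, R (ph 1 0) d /\ R (ph n j) (ph (n+1) j - d).
  by exists (ph 1 0); rewrite phB subr0 addrK; split; exact: Rrefl.
have [d [Hd Hd2]] := TQ Hf W.
have [e [He Ed]] := cls1 Hd (or_introl erefl).
rewrite Ed phB subr0 in Hd2.
have := layerE Hd2 => Hl.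
have -> : - n = - (n + 1) - e by lia.
exact: Hd2.
Qed.

Lemma ShiftUp n j j' b : 0 < n -> R (ph n j) (ph (sg b n) j') ->
  R (ph (n+1) j) (ph (sg b (n+1)) j').
Proof.
move=> n0 H; have Hj := layerJ H.
have n10 : n + 1 != 0 by lia.
have nn0 : n != 0 by lia.
case: (boolP (R (ph (n+1) j) (ph (-(n+1)) j))) => Hf.
  by have [A B] := fullprop n10 Hf Hj; case: b H.
have [c Hc] := exsign (n+1) Hj.
have W : exists d, R (ph 1 0) d /\ R (ph n j) (ph (n+1) j - d).
  by exists (ph 1 0); rewrite phB subr0 addrK; split; exact: Rrefl.
have [d [Hd Hd2]] := TQ Hc W.
have [e [He Ed]] := cls1 Hd (or_introl erefl).
rewrite Ed phB subr0 in Hd2.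
have Hl := layerE Hd2.
have Em : sg c (n+1) - e = sg c n by case: c {Hc Hd2} Hl => /=; lia.
rewrite Em in Hd2.
case: (eqVneq c b) => [<- //|cb].
have cb' : c = ~~ b by move: cb; case: (b); case: (c).
rewrite cb' in Hd2.
by move: Hf; rewrite (FullUp n0 (both nn0 H Hd2)).
Qed.

Lemma ShiftDown n j j' b : 0 < n -> R (ph (n+1) j) (ph (sg b (n+1)) j') ->
  R (ph n j) (ph (sg b n) j').
Proof.
move=> n0 H; have Hj := layerJ H.
have n10 : n + 1 != 0 by lia.
have nn0 : n != 0 by lia.
case: (boolP (R (ph n j) (ph (-n) j))) => Hf.
  by have [A B] := fullprop nn0 Hf Hj; case: b H.
have [c Hc] := exsign n Hj.
have W : exists d, R (ph (-1) 0) d /\ R (ph (n+1) j) (ph n j - d).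
  by exists (ph (-1) 0); rewrite phB subr0 opprK; split; exact: Rrefl.
have [d [Hd Hd2]] := TQ Hc W.
have [e [He Ed]] := cls1 Hd (or_intror erefl).
rewrite Ed phB subr0 in Hd2.
have Hl := layerE Hd2.
have Em : sg c n - e = sg c (n+1) by case: c {Hc Hd2} Hl => /=; lia.
rewrite Em in Hd2.
case: (eqVneq c b) => [<- //|cb].
have cb' : c = ~~ b by move: cb; case: (b); case: (c).
rewrite cb' in Hd2.
by move: Hf; rewrite (FullDown n0 (both n10 H Hd2)).
Qed.

Lemma ShiftN (k : nat) j j' b :
  R (ph 1 j) (ph (sg b 1) j') <-> R (ph k.+1 j) (ph (sg b k.+1) j').
Proof.
elim: k => [//|k IH].
have E : Posz k.+2 = Posz k.+1 + 1 by rewrite -addn1 PoszD.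
rewrite E; split.
  by move/IH; apply: ShiftUp.
by move/ShiftDown => H; apply/IH; apply: H.
Qed.

Lemma Shift1 n j j' b : 0 < n ->
  R (ph n j) (ph (sg b n) j') <-> R (ph 1 j) (ph (sg b 1) j').
Proof.
case: n => [[|k]|k] //= _.
by rewrite (ShiftN k).
Qed.

Lemma ShiftNM n m j j' b : 0 < n -> 0 < m ->
  R (ph n j) (ph (sg b n) j') -> R (ph m j) (ph (sg b m) j').
Proof. by move=> n0 m0 /(Shift1 _ _ _ n0) /(Shift1 _ _ _ m0). Qed.

Lemma unit_nat (v : 'Z_p) : v \is a GRing.unit ->
  [/\ (0 < nat_of_ord v)%N, coprime (nat_of_ord v) p & ((nat_of_ord v)%:R : 'Z_p) = v].
Proof.
move=> vU; have kv : ((nat_of_ord v)%:R : 'Z_p) = v by rewrite natr_Zp.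
split => //.
  rewrite lt0n; apply/negP => /eqP k0; move: vU; rewrite -kv k0 unitr0.
  by [].
by rewrite coprime_sym -unitZpE // kv.
Qed.

Lemma FullMult n j v : 0 < n -> v \is a GRing.unit ->
  R (ph n j) (ph (-n) j) ->
  R (ph (n *+ nat_of_ord v) (v * j)) (ph (- (n *+ nat_of_ord v)) (v * j)).
Proof.
move=> n0 vU Hf.
have [k0 ck kv] := unit_nat vU.
have vU' : v^-1 \is a GRing.unit by rewrite unitrV.
have [k'0 ck' kv'] := unit_nat vU'.
set k := nat_of_ord v in k0 ck kv *; set k' := nat_of_ord v^-1 in k'0 ck' kv' *.
set N := n *+ k.
have N0 : 0 < N by rewrite /N; lia.
have NK0 : 0 < N *+ k' by lia.
have Ex : ph N (v * j) *+ k' = ph (N *+ k') j.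
  by rewrite phMn -(mulr_natr (v * j)) kv' mulrC mulKr.
have Hf2 : R (ph (N *+ k') j) (ph (sg true (N *+ k')) j).
  exact: (ShiftNM (b := true) n0 NK0 Hf).
rewrite -Ex in Hf2.
have [d [Hd Ed]] := FrobC k'0 ck' Hf2.
have [e [He Ed2 _]] := layer Hd.
move: Ed; rewrite Ed2 phMn => /ph_inj [E1 E2].
have Ee : e = - N by move: E1; rewrite /sg; case: He => ->; nia.
have Ea : ac d = v * j.
  by rewrite E2 -(mulr_natr (ac d)) kv' mulrCA mulrV // mulr1.
by rewrite Ed2 Ee Ea in Hd.
Qed.

Lemma Mult n j j' v b : 0 < n -> v \is a GRing.unit ->
  R (ph n j) (ph (sg b n) j') -> R (ph n (v * j)) (ph (sg b n) (v * j')).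
Proof.
move=> n0 vU H.
have [k0 ck kv] := unit_nat vU.
set k := nat_of_ord v in k0 ck kv *.
have Hj := layerJ H; have Hvj := torsU vU Hj.
set N := n *+ k.
have N0 : 0 < N by rewrite /N; lia.
have nn0 : n != 0 by lia.
have NN0 : N != 0 by lia.
suff HN : R (ph N (v * j)) (ph (sg b N) (v * j')) by exact: ShiftNM N0 n0 HN.
case: (boolP (R (ph N (v * j)) (ph (-N) (v * j)))) => Hf.
  by have [A B] := fullprop NN0 Hf Hvj; case: (b).
have [c Hc] := exsign N Hvj.
have Ex : ph n j *+ k = ph N (v * j) by rewrite phMn -(mulr_natr j) kv mulrC.
rewrite -Ex in Hc.
have [d [Hd Ed]] := FrobC k0 ck Hc.
have [e [He Ed2 _]] := layer Hd.
move: Ed; rewrite Ed2 phMn => /ph_inj [E1 E2].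
have Ee : e = sg c n by case: He => He; rewrite He in E1 *; case: (c) E1 => /= E1; nia.
have Ea : ac d = j'.
  by apply: (mulrI vU); rewrite E2 -(mulr_natr (ac d)) kv mulrC.
rewrite Ed2 Ee Ea in Hd.
case: (eqVneq c b) => [Ecb|cb].
  by rewrite -Ex -Ecb.
have cb' : c = ~~ b by move: cb; case: (b); case: (c).
rewrite cb' in Hd.
by move: Hf; rewrite (FullMult n0 vU (both nn0 H Hd)).
Qed.

Definition Kb (bu : bool * 'Z_p) : bool := R (ph 1 1) (ph (sg bu.1 1) bu.2).

Lemma K_unit b u : Kb (b, u) -> u \is a GRing.unit.
Proof. by move/layerJ/U_unit. Qed.

Lemma sg0 b : sg b 0 = 0. Proof. by case: b; rewrite /= ?oppr0. Qed.
Lemma sgN b n : sg b (- n) = - sg b n. Proof. by case: b. Qed.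
Lemma sgD b n m : sg b (n + m) = sg b n + sg b m.
Proof. by case: b; rewrite /= ?opprD. Qed.
Lemma sgsg b c n : sg b (sg c n) = sg (b (+) c) n.
Proof. by case: b; case: c; rewrite /= ?opprK. Qed.

Lemma K1pos n j b u : 0 < n -> Kb (b, u) -> R (ph n j) (ph (sg b n) (u * j)).
Proof.
move=> n0 Hk; rewrite /Kb /= in Hk.
case: (eqVneq j 0) => [->|j0].
  rewrite mulr0; case: b Hk => /= Hk; last exact: Rrefl.
  have Hk' : R (ph n 1) (ph (sg true n) u) by exact: (ShiftNM (b := true) ltr01 n0 Hk).
  have W : exists d, R (ph 0 1) d /\ R (ph n 0) (ph n 1 - d).
    by exists (ph 0 1); rewrite phB subr0 subrr; split; exact: Rrefl.
  have [d [Hd Hd2]] := TQ Hk' W.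
  rewrite (tors Hd) phB subr0 /= in Hd2.
  have [E|E] := Hcls Hd2; last by rewrite E in Hd2.
  have [E1 _] := ph_inj E; lia.
have jU := Zp_unit j0.
have := Mult ltr01 jU Hk; rewrite mulr1 => H1.
by rewrite mulrC; exact: ShiftNM ltr01 n0 H1.
Qed.

Lemma K1ph n j b u : Kb (b, u) -> R (ph n j) (ph (sg b n) (u * j)).
Proof.
move=> Hk.
have [n0|n0|->] := ltgtP n 0; last first.
- rewrite sg0; case: (eqVneq j 0) => [->|j0]; first by rewrite mulr0; exact: Rrefl.
  by apply/(torsE _ j0); exists u; split; [exact: layerJ Hk | rewrite mulrC].
- exact: K1pos.
have := Rneg (K1pos (-j) (ltac:(by rewrite oppr_gt0) : 0 < - n) Hk).
by rewrite !phN sgN mulrN !opprK.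
Qed.

Lemma K2pos n j y : 0 < n -> R (ph n j) y ->
  exists b u, Kb (b, u) /\ y = ph (sg b n) (u * j).
Proof.
move=> n0 H.
have [e [He Ey Hj]] := layer H.
case: (eqVneq j 0) => [j0|j0].
  rewrite j0 ph00 R0 -ph00 in Hj; have [_ /eqP a0] := ph_inj (eqP Hj).
  rewrite (eqP a0) in Ey.
  case: He => He; rewrite He in Ey.
    by exists false, 1; split; [exact: Rrefl | rewrite j0 mulr0].
  rewrite Ey j0 in H.
  have W : exists d, R (ph 0 (-1)) d /\ R (ph n 1) (ph n 0 - d).
    by exists (ph 0 (-1)); rewrite phB subr0 opprK add0r; split; exact: Rrefl.
  have [d [Hd Hd2]] := TQ H W.
  rewrite (tors Hd) phB subr0 sub0r in Hd2.
  have Hk := ShiftNM (b := true) n0 ltr01 Hd2.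
  by exists true, (- ac d); split => //; rewrite Ey j0 mulr0.
have [u [Hu Eu]] := (torsE _ j0).1 Hj.
have [b Eb] : exists b, e = sg b n by case: He => ->; [exists false | exists true].
have [_ Eu'] := ph_inj Eu.
rewrite Eu' Eb in Ey; rewrite Ey in H.
have H1 := ShiftNM n0 ltr01 H.
have jU := Zp_unit j0.
have jU' : j^-1 \is a GRing.unit by rewrite unitrV.
have := Mult ltr01 jU' H1; rewrite mulVr // mulKr // => Hk.
by exists b, u; split => //; rewrite Ey mulrC.
Qed.

Lemma K2ph n j y : R (ph n j) y ->
  exists b u, Kb (b, u) /\ y = ph (sg b n) (u * j).
Proof.
move=> H.
have [n0|n0|n0] := ltgtP n 0; last first.
- rewrite n0 in H *; have Ey := tors H.
  case: (eqVneq j 0) => [j0|j0].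
    rewrite j0 ph00 R0 in H; rewrite (eqP H); exists false, 1.
    by rewrite j0 mulr0 sg0 ph00; split => //; exact: Rrefl.
  have [u [Hu ->]] := (torsE _ j0).1 H.
  have [b Hb] := exsign 1 Hu.
  by exists b, u; split => //; rewrite sg0 mulrC.
- exact: K2pos.
have H' := Rneg H; rewrite phN in H'.
have := K2pos (ltac:(by rewrite oppr_gt0) : 0 < - n) H'.
case=> b [u [Hk E]]; exists b, u; split => //.
by rewrite -[y]opprK E phN sgN mulrN !opprK.
Qed.

Definition sgm (bu : bool * 'Z_p) (x : G) : G := ph (sg bu.1 x.1) (bu.2 * ac x).

Lemma sig_ph bu n j : sgm bu (ph n j) = ph (sg bu.1 n) (bu.2 * j).
Proof. by rewrite /sgm ph1 acph. Qed.

Lemma sigK1 bu x : Kb bu -> R x (sgm bu x).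
Proof. by case: bu => b u Hk; rewrite -{1}(phE x) /sgm; exact: K1ph. Qed.

Lemma sigK2 x y : R x y -> exists bu, Kb bu /\ y = sgm bu x.
Proof.
rewrite -{1}(phE x) => /K2ph [b [u [Hk ->]]].
by exists (b, u); split => //; rewrite /sgm.
Qed.

Lemma sig_add bu x y : sgm bu (x + y) = sgm bu x + sgm bu y.
Proof.
rewrite -{1}(phE x) -{1}(phE y) phD sig_ph /sgm phD.
by rewrite sgD mulrDr.
Qed.

Lemma sig_comp bu cv x :
  sgm bu (sgm cv x) = sgm (bu.1 (+) cv.1, bu.2 * cv.2) x.
Proof. by rewrite /sgm ph1 acph sgsg mulrA. Qed.

Lemma sig_id x : sgm (false, 1) x = x.
Proof. by rewrite /sgm /= mul1r phE. Qed.

Lemma sig_inv bu : bu.2 \is a GRing.unit ->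
  cancel (sgm bu) (sgm (bu.1, bu.2^-1)).
Proof.
move=> uU x; rewrite sig_comp /= addbb mulVr //.
exact: sig_id.
Qed.

Lemma K_comp bu cv : Kb bu -> Kb cv -> Kb (bu.1 (+) cv.1, bu.2 * cv.2).
Proof.
case: bu => b u; case: cv => c v /= Hb Hc.
have := K1ph (sg c 1) v Hb; rewrite sgsg /= => H.
exact: Rtr Hc H.
Qed.

Lemma K_inv bu : Kb bu -> Kb (bu.1, bu.2^-1).
Proof.
case: bu => b u /= Hb; have uU := K_unit Hb.
have := K1ph (sg b 1) (u^-1) Hb; rewrite sgsg addbb mulrV //= => H.
exact: RS H.
Qed.

Lemma sig_aut bu : Kb bu -> group_aut (sgm bu).
Proof.
case: bu => b u Hb; have uU := K_unit Hb; split.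
  exact: sig_add.
exists (sgm (b, u^-1)); first exact: sig_inv.
have := sig_inv (bu := (b, u^-1)); rewrite /= invrK; apply.
by rewrite unitrV.
Qed.

Lemma spanL_fin (l : seq (G * F)) : fin_supp (spanL l).
Proof.
elim: l => [|xc l [s Hs]].
  by exists [::] => g; rewrite /spanL big_nil eqxx.
have [t [Ut Mt]] := sr_finite SR xc.1.
exists (t ++ s) => g; rewrite /spanL big_cons mem_cat Mt.
case: (boolP (R xc.1 g)) => //= Hg.
by rewrite /class_sum (negbTE Hg) mulr0 add0r => /Hs.
Qed.

Lemma inv_span (f : G -> F) : fin_supp f ->
  (forall x y, R x y -> f x = f y) -> schur_span R f.
Proof.
case=> s0 Hs0 Hinv.
set S0 := undup s0.
set m := fun x => (count (R x) S0)%:R : F.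
have -> : f = spanL [seq (x, f x / m x) | x <- S0].
  apply: functional_extensionality => g.
  rewrite /spanL big_map /=.
  have E : forall x, x \in S0 -> f x / m x * class_sum F R x g =
                                 f g / m g * (R x g)%:R.
    move=> x _; rewrite /class_sum.
    case: (boolP (R x g)) => Hxg; last by rewrite !mulr0.
    rewrite (Hinv _ _ Hxg) /m; congr (_ / _%:R * _).
    by apply: eq_count => z; rewrite Rsym [R g z]Rsym; apply: Rcl.
  rewrite (eq_big_seq _ E) -big_distrr /= -natr_sum sum_count.
  have -> : count (fun x => R x g) S0 = count (R g) S0.
    by apply: eq_count => z; rewrite Rsym.
  case: (eqVneq (f g) 0) => [->|fg0]; first by rewrite !mul0r.
  have gS : g \in S0 by rewrite mem_undup; exact: Hs0.
  have mpos : (0 < count (R g) S0)%N.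
    by rewrite -has_count; apply/hasP; exists g => //; exact: Rrefl.
  rewrite /m divfK //; rewrite ((pcharf0P F).1 char0).
  by rewrite -lt0n.
exact: L_span.
Qed.

Lemma K_unit' bu : Kb bu -> bu.2 \is a GRing.unit.
Proof. by case: bu => b u; exact: K_unit. Qed.

Lemma auto_main : automorphic F R.
Proof.
pose kl := [seq bu <- enum {: bool * 'Z_p} | Kb bu].
have kl_mem : forall k : 'I_(size kl), Kb (nth (false, 1) kl k).
  move=> k; have := mem_nth (false, 1) (ltn_ord k).
  by rewrite mem_filter => /andP[].
have kl_idx : forall bu, Kb bu -> exists k : 'I_(size kl), nth (false, 1) kl k = bu.
  move=> bu Hb; have Hin : bu \in kl by rewrite mem_filter Hb mem_enum.
  by exists (Ordinal (etrans (index_mem bu kl) Hin)); rewrite /= nth_index.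
exists (size kl), (fun k => sgm (nth (false, 1) kl k)); split.
- by move=> k; exact: sig_aut (kl_mem k).
- have [k Hk] := kl_idx (false, 1) (Rrefl _).
  by exists k => x; rewrite /= Hk sig_id.
- move=> k l; have [m Hm] := kl_idx _ (K_comp (kl_mem k) (kl_mem l)).
  by exists m => x; rewrite /= Hm sig_comp.
- move=> k; have [m Hm] := kl_idx _ (K_inv (kl_mem k)).
  by exists m; rewrite Hm; apply: sig_inv; exact: K_unit' (kl_mem k).
move=> f; split.
  move=> Hf; split.
    by case/span_L: Hf => l ->; exact: spanL_fin.
  by move=> k g; symmetry; apply: span_const Hf (sigK1 _ (kl_mem k)).
case=> Hfs Hinv; apply: inv_span => // x y /sigK2 [bu [Hb ->]].
have [k Hk] := kl_idx _ Hb.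
by have := Hinv k x; rewrite /= Hk => ->.
Qed.

End Main.

Theorem corollary3p5 (F : fieldType) (p : nat) (R : rel (grp p)) :
  [pchar F] =i pred0 -> prime p ->
  schur_ring F R ->
  (exists i : int, S_subgroup R (cyc ((1%:Z, i%:~R) : grp p))) ->
  automorphic F R.
Proof.
move=> char0 pp SR [i HS].
exact: (auto_main char0 pp SR HS).
Qed.
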